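(* Let $\Gamma''$ be a congruence subgroup of $\operatorname{Mp}_2(\mathbb{Z})$, let $f$ be a harmonic Maass form of weight $k$ and $g$ a harmonic Maass form of weight $l$ for $\Gamma''$. For every non-negative integer $j$, \[ (-4\pi)^jL[f,g]_j=\binom{l+j-1}{j}(R_k^jf)(Lg)+(-1)^j\binom{k+j-1}{j}(Lf)(R_l^jg). \]
   Context: $\tau=u+iv\in\mathbb{H}$. $R_k=2i\partial_\tau+kv^{-1}$, $L=L_k=-2iv^2\partial_{\bar\tau}$ (independent of $k$), $R_k^j=R_{k+2(j-1)}\circ\cdots\circ R_k$. The weight $k$ Laplacian is $\Delta_k=-v^2(\partial_u^2+\partial_v^2)+ikv(\partial_u+i\partial_v)$. A harmonic Maass form of weight $k$ for $\Gamma''$ is a smooth $f:\mathbb{H}\to\mathbb{C}$ invariant under the weight $k$ slash action of $\Gamma''$, with $\Delta_kf=0$ and at most exponential growth at the cusps. The $j$-th Rankin–Cohen bracket of $f$ (weight $k$) and $g$ (weight $l$) is $[f,g]_j=\sum_{s=0}^j(-1)^s\binom{k+j-1}{s}\binom{l+j-1}{j-s}f^{(j-s)}g^{(s)}$, where $f^{(s)}=(2\pi i)^{-s}\partial_\tau^sf$ and $\binom{x}{s}=x(x-1)\cdots(x-s+1)/s!$ for real $x$. *)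

(* Defs.v *)
From Stdlib Require Import Reals ZArith.
From Coquelicot Require Export Coquelicot.
Open Scope R_scope.

Definition upper (tau : C) : Prop := 0 < Im tau.

Definition du (f : C -> C) : C -> C := fun tau =>
  (Derive (fun t => Re (f (t, Im tau))) (Re tau),
   Derive (fun t => Im (f (t, Im tau))) (Re tau)).
Definition dv (f : C -> C) : C -> C := fun tau =>
  (Derive (fun t => Re (f (Re tau, t))) (Im tau),
   Derive (fun t => Im (f (Re tau, t))) (Im tau)).

Definition dtau (f : C -> C) : C -> C := fun tau =>
  (/ 2 * (du f tau - Ci * dv f tau))%C.
Definition dtaubar (f : C -> C) : C -> C := fun tau =>
  (/ 2 * (du f tau + Ci * dv f tau))%C.

Fixpoint dword (w : list bool) (f : C -> C) : C -> C :=
  match w with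
  | nil => f
  | cons true w' => du (dword w' f)
  | cons false w' => dv (dword w' f)
  end.

Definition smooth_on_H (f : C -> C) : Prop :=
  forall (w : list bool) (tau : C), upper tau ->
    ex_derive (fun t => Re (dword w f (t, Im tau))) (Re tau) /\
    ex_derive (fun t => Im (dword w f (t, Im tau))) (Re tau) /\
    ex_derive (fun t => Re (dword w f (Re tau, t))) (Im tau) /\
    ex_derive (fun t => Im (dword w f (Re tau, t))) (Im tau) /\
    continuous (dword w f) tau.

Definition Rop (k : R) (f : C -> C) : C -> C := fun tau =>
  (2 * Ci * dtau f tau + RtoC (k / Im tau) * f tau)%C.
Definition Lop (f : C -> C) : C -> C := fun tau =>
  (- (2 * Ci) * RtoC (Im tau ^ 2) * dtaubar f tau)%C.

(** R_k^j = R_{k+2(j-1)} o ... o R_k. *)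
Fixpoint Rit (k : R) (j : nat) (f : C -> C) : C -> C :=
  match j with
  | O => f
  | S j' => Rit (k + 2) j' (Rop k f)
  end.

Definition Lap (k : R) (f : C -> C) : C -> C := fun tau =>
  (- RtoC (Im tau ^ 2) * (du (du f) tau + dv (dv f) tau)
   + Ci * RtoC (k * Im tau) * (du f tau + Ci * dv f tau))%C.

Fixpoint falling (x : R) (s : nat) : R :=
  match s with
  | O => 1
  | S s' => falling x s' * (x - INR s')
  end.
Definition gbinom (x : R) (s : nat) : R := falling x s / INR (fact s).

Definition dnorm (s : nat) (f : C -> C) : C -> C := fun tau =>
  (/ Cpow (RtoC (2 * PI) * Ci) s * Nat.iter s dtau f tau)%C.

Definition RCbracket (k l : R) (j : nat) (f g : C -> C) : C -> C := fun tau =>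
  sum_n (fun s : nat =>
    (RtoC ((-1) ^ s * gbinom (k + INR j - 1) s * gbinom (l + INR j - 1) (j - s))
       * dnorm (j - s) f tau * dnorm s g tau)%C) j.

(** An element is a pair (gamma, phi) with gamma = (a b; c d) in SL_2(Z) and
    phi a holomorphic function on H with phi(tau)^2 = c tau + d. *)
Record mp2 := Mp2 { mp_a : Z; mp_b : Z; mp_c : Z; mp_d : Z; mp_phi : C -> C }.

Definition in_Mp2 (x : mp2) : Prop :=
  (mp_a x * mp_d x - mp_b x * mp_c x = 1)%Z /\
  forall tau, upper tau ->
    ex_derive (K := C_AbsRing) (V := C_NormedModule) (mp_phi x) tau /\
    (mp_phi x tau * mp_phi x tau = RtoC (IZR (mp_c x)) * tau + RtoC (IZR (mp_d x)))%C.

Definition mact (x : mp2) (tau : C) : C :=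
  ((RtoC (IZR (mp_a x)) * tau + RtoC (IZR (mp_b x))) /
   (RtoC (IZR (mp_c x)) * tau + RtoC (IZR (mp_d x))))%C.

Definition mp_mul (x y : mp2) : mp2 :=
  Mp2 (mp_a x * mp_a y + mp_b x * mp_c y)%Z (mp_a x * mp_b y + mp_b x * mp_d y)%Z
      (mp_c x * mp_a y + mp_d x * mp_c y)%Z (mp_c x * mp_b y + mp_d x * mp_d y)%Z
      (fun tau => (mp_phi x (mact y tau) * mp_phi y tau)%C).
Definition mp_one : mp2 := Mp2 1 0 0 1 (fun _ => RtoC 1).
Definition mp_inv (x : mp2) : mp2 :=
  let y := Mp2 (mp_d x) (- mp_b x) (- mp_c x) (mp_a x) (fun _ => RtoC 1) in
  Mp2 (mp_d x) (- mp_b x) (- mp_c x) (mp_a x) (fun tau => (/ mp_phi x (mact y tau))%C).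

(** Two elements are equal in Mp_2(Z) when the matrices agree and the
    functions agree on H (elements are functions on H). *)
Definition mp_eq (x y : mp2) : Prop :=
  mp_a x = mp_a y /\ mp_b x = mp_b y /\ mp_c x = mp_c y /\ mp_d x = mp_d y /\
  forall tau, upper tau -> mp_phi x tau = mp_phi y tau.

Definition subgroup_Mp2 (G : mp2 -> Prop) : Prop :=
  (forall x, G x -> in_Mp2 x) /\
  (forall x y, G x -> in_Mp2 y -> mp_eq x y -> G y) /\
  G mp_one /\
  (forall x y, G x -> G y -> G (mp_mul x y)) /\
  (forall x, G x -> G (mp_inv x)).

Definition congruence_subgroup_Mp2 (G : mp2 -> Prop) : Prop :=
  subgroup_Mp2 G /\
  exists N : Z, (1 <= N)%Z /\
    forall a b c d : Z, (a * d - b * c = 1)%Z ->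
      (N | a - 1)%Z -> (N | b)%Z -> (N | c)%Z -> (N | d - 1)%Z ->
      exists x, G x /\ mp_a x = a /\ mp_b x = b /\ mp_c x = c /\ mp_d x = d.

Definition Cpowz (z : C) (m : Z) : C :=
  match m with
  | Z0 => RtoC 1
  | Zpos p => Cpow z (Pos.to_nat p)
  | Zneg p => (/ Cpow z (Pos.to_nat p))%C
  end.

(** Weight k slash action, k = m/2 half-integral: (f|_k (gamma,phi))(tau) = phi(tau)^{-2k} f(gamma tau). *)
Definition slash (m : Z) (f : C -> C) (x : mp2) : C -> C := fun tau =>
  (Cpowz (mp_phi x tau) (- m) * f (mact x tau))%C.

Definition harmonic_Maass (G : mp2 -> Prop) (k : R) (f : C -> C) : Prop :=
  smooth_on_H f /\
  (exists m : Z, IZR m = 2 * k /\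
     (forall x, G x -> forall tau, upper tau -> slash m f x tau = f tau) /\
     (* at most exponential growth at all cusps *)
     (forall sigma, in_Mp2 sigma -> exists Cc M : R, forall tau, 1 <= Im tau ->
        Cmod (slash m f sigma tau) <= M * exp (Cc * Im tau))) /\
  (forall tau, upper tau -> Lap k f tau = RtoC 0).

(* Main.v *)
Require Import Defs.
From Stdlib Require Import Reals.
From Coquelicot Require Import Coquelicot.
From Stdlib Require Import Lra Lia List.
Open Scope R_scope.


Definition Dl (ga : R -> C) (t0 : R) (F : C -> C) : C :=
  (Derive (fun t => Re (F (ga t))) t0, Derive (fun t => Im (F (ga t))) t0).
Definition exl (ga : R -> C) (t0 : R) (F : C -> C) : Prop :=
  ex_derive (fun t => Re (F (ga t))) t0 /\ ex_derive (fun t => Im (F (ga t))) t0.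

Lemma exl_plus ga t0 F G : exl ga t0 F -> exl ga t0 G -> exl ga t0 (fun z => (F z + G z)%C).
Proof. intros [a b] [c d]; split; simpl.
  apply (ex_derive_plus (fun t => Re (F (ga t))) (fun t => Re (G (ga t)))); auto.
  apply (ex_derive_plus (fun t => Im (F (ga t))) (fun t => Im (G (ga t)))); auto. Qed.

Lemma exl_mult ga t0 F G : exl ga t0 F -> exl ga t0 G -> exl ga t0 (fun z => (F z * G z)%C).
Proof. intros [a b] [c d]; split; simpl.
  apply (ex_derive_minus (fun t => Re (F (ga t)) * Re (G (ga t))) (fun t => Im (F (ga t)) * Im (G (ga t))));
   apply ex_derive_mult; auto.
  apply (ex_derive_plus (fun t => Re (F (ga t)) * Im (G (ga t))) (fun t => Im (F (ga t)) * Re (G (ga t))));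
   apply ex_derive_mult; auto. Qed.

Lemma exl_const ga t0 c : exl ga t0 (fun _ => c).
Proof. split; apply ex_derive_const. Qed.

Lemma Dl_plus ga t0 F G : exl ga t0 F -> exl ga t0 G ->
  Dl ga t0 (fun z => (F z + G z)%C) = (Dl ga t0 F + Dl ga t0 G)%C.
Proof. intros [a b] [c d]; unfold Dl; simpl.
  rewrite (Derive_plus (fun t => Re (F (ga t)))) by auto.
  rewrite (Derive_plus (fun t => Im (F (ga t)))) by auto. reflexivity. Qed.

Lemma Dl_mult ga t0 F G : exl ga t0 F -> exl ga t0 G ->
  Dl ga t0 (fun z => (F z * G z)%C) = (Dl ga t0 F * G (ga t0) + F (ga t0) * Dl ga t0 G)%C.
Proof. intros [a b] [c d]; unfold Dl; simpl.
  rewrite (Derive_minus (fun t => Re (F (ga t)) * Re (G (ga t))) (fun t => Im (F (ga t)) * Im (G (ga t))))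
    by (apply ex_derive_mult; auto).
  rewrite (Derive_plus (fun t => Re (F (ga t)) * Im (G (ga t))) (fun t => Im (F (ga t)) * Re (G (ga t))))
    by (apply ex_derive_mult; auto).
  rewrite !Derive_mult by auto. apply injective_projections; simpl; unfold Re, Im; ring. Qed.

Lemma Dl_const ga t0 c : Dl ga t0 (fun _ => c) = 0%C.
Proof. unfold Dl. rewrite !Derive_const. reflexivity. Qed.

Lemma Dl_ext ga t0 F G : locally t0 (fun t => F (ga t) = G (ga t)) -> Dl ga t0 F = Dl ga t0 G.
Proof. intros H. unfold Dl. f_equal; apply Derive_ext_loc;
  (eapply filter_imp; [|exact H]); simpl; intros t E; rewrite E; reflexivity. Qed.

Lemma exl_ext ga t0 F G : locally t0 (fun t => F (ga t) = G (ga t)) -> exl ga t0 F -> exl ga t0 G.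
Proof. intros H [a b]; split; [eapply ex_derive_ext_loc; [|exact a] | eapply ex_derive_ext_loc; [|exact b]];
  (eapply filter_imp; [|exact H]); simpl; intros t E; rewrite E; reflexivity. Qed.
Definition gu (tau : C) : R -> C := fun t => (t, Im tau).
Definition gv (tau : C) : R -> C := fun t => (Re tau, t).
Definition hu F tau := exl (gu tau) (Re tau) F.
Definition hv F tau := exl (gv tau) (Im tau) F.
Definition H1 F tau := hu F tau /\ hv F tau.

Lemma du_Dl F tau : du F tau = Dl (gu tau) (Re tau) F. Proof. reflexivity. Qed.
Lemma dv_Dl F tau : dv F tau = Dl (gv tau) (Im tau) F. Proof. reflexivity. Qed.
Lemma gu_pt tau : gu tau (Re tau) = tau. Proof. destruct tau; reflexivity. Qed.
Lemma gv_pt tau : gv tau (Im tau) = tau. Proof. destruct tau; reflexivity. Qed.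

Lemma loc_u (P : C -> Prop) tau : upper tau -> (forall z, upper z -> P z) ->
  locally (Re tau) (fun t => P (gu tau t)).
Proof. intros Ht HP. apply filter_forall. intros t. apply HP. exact Ht. Qed.

Lemma loc_v (P : C -> Prop) tau : upper tau -> (forall z, upper z -> P z) ->
  locally (Im tau) (fun t => P (gv tau t)).
Proof. intros Ht HP. exists (mkposreal _ Ht). intros t Hb. apply HP.
  unfold upper, gv; simpl. change (Rabs (t - Im tau) < Im tau) in Hb.
  apply Rabs_def2 in Hb. lra. Qed.

Lemma loc_C tau : upper tau -> locally tau upper.
Proof. intros Ht. exists (mkposreal _ Ht). intros [x y] [_ Hb]. 
  unfold upper; simpl. change (Rabs (y - Im tau) < Im tau) in Hb.
  apply Rabs_def2 in Hb. lra. Qed.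

Lemma du_ext F G tau : upper tau -> (forall z, upper z -> F z = G z) -> du F tau = du G tau.
Proof. intros Ht HE. rewrite !du_Dl. apply Dl_ext. apply (loc_u (fun z => F z = G z)); auto. Qed.
Lemma dv_ext F G tau : upper tau -> (forall z, upper z -> F z = G z) -> dv F tau = dv G tau.
Proof. intros Ht HE. rewrite !dv_Dl. apply Dl_ext. apply (loc_v (fun z => F z = G z)); auto. Qed.
Lemma hu_ext F G tau : upper tau -> (forall z, upper z -> F z = G z) -> hu F tau -> hu G tau.
Proof. intros Ht HE. apply exl_ext. apply (loc_u (fun z => F z = G z)); auto. Qed.
Lemma hv_ext F G tau : upper tau -> (forall z, upper z -> F z = G z) -> hv F tau -> hv G tau.
Proof. intros Ht HE. apply exl_ext. apply (loc_v (fun z => F z = G z)); auto. Qed.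
Lemma H1_ext F G tau : upper tau -> (forall z, upper z -> F z = G z) -> H1 F tau -> H1 G tau.
Proof. intros Ht HE [a b]; split; [eapply hu_ext|eapply hv_ext]; eauto. Qed.

Lemma H1_plus F G tau : H1 F tau -> H1 G tau -> H1 (fun z => (F z + G z)%C) tau.
Proof. intros [a b] [c d]; split; apply exl_plus; auto. Qed.
Lemma H1_mult F G tau : H1 F tau -> H1 G tau -> H1 (fun z => (F z * G z)%C) tau.
Proof. intros [a b] [c d]; split; apply exl_mult; auto. Qed.
Lemma H1_const c tau : H1 (fun _ => c) tau.
Proof. split; apply exl_const. Qed.

Lemma du_plus F G tau : H1 F tau -> H1 G tau -> du (fun z => (F z + G z)%C) tau = (du F tau + du G tau)%C.
Proof. intros [a b] [c d]. rewrite !du_Dl. apply Dl_plus; auto. Qed.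
Lemma dv_plus F G tau : H1 F tau -> H1 G tau -> dv (fun z => (F z + G z)%C) tau = (dv F tau + dv G tau)%C.
Proof. intros [a b] [c d]. rewrite !dv_Dl. apply Dl_plus; auto. Qed.
Lemma du_mult F G tau : H1 F tau -> H1 G tau -> du (fun z => (F z * G z)%C) tau = (du F tau * G tau + F tau * du G tau)%C.
Proof. intros [a b] [c d]. rewrite !du_Dl, Dl_mult, gu_pt; auto. Qed.
Lemma dv_mult F G tau : H1 F tau -> H1 G tau -> dv (fun z => (F z * G z)%C) tau = (dv F tau * G tau + F tau * dv G tau)%C.
Proof. intros [a b] [c d]. rewrite !dv_Dl, Dl_mult, gv_pt; auto. Qed.
Lemma du_const c tau : du (fun _ => c) tau = 0%C.
Proof. rewrite du_Dl. apply Dl_const. Qed.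
Lemma dv_const c tau : dv (fun _ => c) tau = 0%C.
Proof. rewrite dv_Dl. apply Dl_const. Qed.

Definition Phi (phi : R -> R) (z : C) : C := RtoC (phi (Im z)).

Lemma H1_Phi phi tau : ex_derive phi (Im tau) -> H1 (Phi phi) tau.
Proof. intros Hd. split; split; unfold Phi, gu, gv; simpl.
  apply ex_derive_const. apply ex_derive_const. exact Hd. apply ex_derive_const. Qed.
Lemma du_Phi phi tau : du (Phi phi) tau = 0%C.
Proof. unfold du, Phi; simpl. rewrite !Derive_const. reflexivity. Qed.
Lemma dv_Phi phi tau : dv (Phi phi) tau = RtoC (Derive phi (Im tau)).
Proof. unfold dv, Phi; simpl. rewrite Derive_const. reflexivity. Qed.

Open Scope C_scope.
Lemma dtau_plus F G tau : H1 F tau -> H1 G tau -> dtau (fun z => F z + G z) tau = dtau F tau + dtau G tau.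
Proof. intros. unfold dtau. rewrite du_plus, dv_plus by auto. ring. Qed.
Lemma dtaubar_plus F G tau : H1 F tau -> H1 G tau -> dtaubar (fun z => F z + G z) tau = dtaubar F tau + dtaubar G tau.
Proof. intros. unfold dtaubar. rewrite du_plus, dv_plus by auto. ring. Qed.
Lemma dtau_mult F G tau : H1 F tau -> H1 G tau -> dtau (fun z => F z * G z) tau = dtau F tau * G tau + F tau * dtau G tau.
Proof. intros. unfold dtau. rewrite du_mult, dv_mult by auto. ring. Qed.
Lemma dtaubar_mult F G tau : H1 F tau -> H1 G tau -> dtaubar (fun z => F z * G z) tau = dtaubar F tau * G tau + F tau * dtaubar G tau.
Proof. intros. unfold dtaubar. rewrite du_mult, dv_mult by auto. ring. Qed.
Lemma dtau_const c tau : dtau (fun _ => c) tau = 0.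
Proof. unfold dtau. rewrite du_const, dv_const. ring. Qed.
Lemma dtaubar_const c tau : dtaubar (fun _ => c) tau = 0.
Proof. unfold dtaubar. rewrite du_const, dv_const. ring. Qed.
Lemma dtau_Phi phi tau : dtau (Phi phi) tau = - Ci / 2 * RtoC (Derive phi (Im tau)).
Proof. unfold dtau. rewrite du_Phi, dv_Phi. field. Qed.
Lemma dtaubar_Phi phi tau : dtaubar (Phi phi) tau = Ci / 2 * RtoC (Derive phi (Im tau)).
Proof. unfold dtaubar. rewrite du_Phi, dv_Phi. field. Qed.
Lemma dtau_ext F G tau : upper tau -> (forall z, upper z -> F z = G z) -> dtau F tau = dtau G tau.
Proof. intros. unfold dtau. rewrite (du_ext F G), (dv_ext F G) by auto. reflexivity. Qed.
Lemma dtaubar_ext F G tau : upper tau -> (forall z, upper z -> F z = G z) -> dtaubar F tau = dtaubar G tau.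
Proof. intros. unfold dtaubar. rewrite (du_ext F G), (dv_ext F G) by auto. reflexivity. Qed.
Close Scope C_scope.
Definition ok1 F tau := H1 F tau /\ continuous F tau.
Definition okn (n : nat) F := forall w, (length w <= n)%nat -> forall tau, upper tau -> ok1 (dword w F) tau.

Lemma smooth_iff F : smooth_on_H F <-> forall n, okn n F.
Proof. split.
- intros H n w _ tau Ht. destruct (H w tau Ht) as (a&b&c&d&e). repeat split; auto.
- intros H w tau Ht. destruct (H (length w) w (le_n _) tau Ht) as [[[a b] [c d]] e].
  repeat split; auto.
Qed.

Lemma dword_ext F G : (forall z, upper z -> F z = G z) -> forall w z, upper z -> dword w F z = dword w G z.
Proof. intros HE w; induction w as [|b w IH]; intros z Hz; simpl; auto.
  destruct b; [apply du_ext|apply dv_ext]; auto. Qed.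

Lemma ok1_ext F G tau : upper tau -> (forall z, upper z -> F z = G z) -> ok1 F tau -> ok1 G tau.
Proof. intros Ht HE [a b]. split. eapply H1_ext; eauto.
  apply (continuous_ext_loc _ F). eapply filter_imp; [|apply (loc_C _ Ht)].
  intros z Hz; auto. exact b. Qed.

Lemma dword_app w b F : dword (w ++ b :: nil) F = dword w (if b then du F else dv F).
Proof. induction w as [|a w IH]; simpl. reflexivity. rewrite IH. reflexivity. Qed.

Lemma cont_plus (F G : C -> C) (tau : C) : continuous (T:=C_UniformSpace) (U:=C_UniformSpace) F tau -> continuous (T:=C_UniformSpace) (U:=C_UniformSpace) G tau -> continuous (T:=C_UniformSpace) (U:=C_UniformSpace) (fun z => (F z + G z)%C) tau.
Proof. intros a b. apply (continuous_plus (V := C_NormedModule) F G); auto. Qed.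
Lemma cont_Re (F : C -> C) (tau : C) : continuous (T:=C_UniformSpace) (U:=C_UniformSpace) F tau ->
  continuous (T:=C_UniformSpace) (U:=R_UniformSpace) (fun z => Re (F z)) tau.
Proof. intros HF P [eps HP]. apply (HF (fun c => P (Re c))). exists eps. intros [a b] [Ha Hb]. apply HP. exact Ha. Qed.
Lemma cont_Im (F : C -> C) (tau : C) : continuous (T:=C_UniformSpace) (U:=C_UniformSpace) F tau ->
  continuous (T:=C_UniformSpace) (U:=R_UniformSpace) (fun z => Im (F z)) tau.
Proof. intros HF P [eps HP]. apply (HF (fun c => P (Im c))). exists eps. intros [a b] [Ha Hb]. apply HP. exact Hb. Qed.
Lemma cont_pair (F : C -> C) (tau : C) :
  continuous (T:=C_UniformSpace) (U:=R_UniformSpace) (fun z => Re (F z)) tau ->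
  continuous (T:=C_UniformSpace) (U:=R_UniformSpace) (fun z => Im (F z)) tau ->
  continuous (T:=C_UniformSpace) (U:=C_UniformSpace) F tau.
Proof. intros H1 H2 P [eps HP].
  assert (A1 : locally tau (fun z => ball (Re (F tau)) eps (Re (F z)))) by exact (H1 _ (locally_ball _ eps)).
  assert (A2 : locally tau (fun z => ball (Im (F tau)) eps (Im (F z)))) by exact (H2 _ (locally_ball _ eps)).
  change (locally tau (fun z => P (F z))). generalize (filter_and _ _ A1 A2). apply filter_imp. intros z [B1 B2]. apply HP.
  destruct (F tau), (F z). split; auto. Qed.
Lemma cont_mult (F G : C -> C) (tau : C) : continuous (T:=C_UniformSpace) (U:=C_UniformSpace) F tau -> continuous (T:=C_UniformSpace) (U:=C_UniformSpace) G tau -> continuous (T:=C_UniformSpace) (U:=C_UniformSpace) (fun z => (F z * G z)%C) tau.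
Proof. intros a b. apply cont_Re in a as a1. apply cont_Im in a as a2.
  apply cont_Re in b as b1. apply cont_Im in b as b2.
  apply cont_pair; simpl.
  - apply (continuous_minus (V:=R_NormedModule) (fun z => Re (F z) * Re (G z)) (fun z => Im (F z) * Im (G z)));
    apply (continuous_mult (K:=R_AbsRing)); auto.
  - apply (continuous_plus (V:=R_NormedModule) (fun z => Re (F z) * Im (G z)) (fun z => Im (F z) * Re (G z)));
    apply (continuous_mult (K:=R_AbsRing)); auto.
Qed.
Lemma cont_const (c : C) (tau : C) : continuous (T:=C_UniformSpace) (U:=C_UniformSpace) (fun _ : C => c) tau.
Proof. apply continuous_const. Qed.

Lemma ok1_plus F G tau : ok1 F tau -> ok1 G tau -> ok1 (fun z => (F z + G z)%C) tau.
Proof. intros [a b] [c d]; split; [apply H1_plus|apply cont_plus]; auto. Qed.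
Lemma ok1_mult F G tau : ok1 F tau -> ok1 G tau -> ok1 (fun z => (F z * G z)%C) tau.
Proof. intros [a b] [c d]; split; [apply H1_mult|apply cont_mult]; auto. Qed.
Lemma ok1_const c tau : ok1 (fun _ => c) tau.
Proof. split; [apply H1_const|apply cont_const]. Qed.

Lemma dword_plus_eq n F G : okn n F -> okn n G -> forall w, (length w <= S n)%nat ->
  forall z, upper z -> dword w (fun y => (F y + G y)%C) z = (dword w F z + dword w G z)%C.
Proof. intros HF HG w; induction w as [|b w IH]; intros Hl z Hz; simpl; auto.
  simpl in Hl. assert (Hl' : (length w <= n)%nat) by (apply le_S_n; exact Hl).
  destruct b.
  - rewrite (du_ext _ (fun y => (dword w F y + dword w G y)%C)) by (auto; intros; apply IH; auto).
    apply du_plus; [apply HF|apply HG]; auto.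
  - rewrite (dv_ext _ (fun y => (dword w F y + dword w G y)%C)) by (auto; intros; apply IH; auto).
    apply dv_plus; [apply HF|apply HG]; auto.
Qed.

Lemma okn_plus n F G : okn n F -> okn n G -> okn n (fun y => (F y + G y)%C).
Proof. intros HF HG w Hl tau Ht.
  apply (ok1_ext (fun y => (dword w F y + dword w G y)%C)); auto.
  intros; symmetry; apply (dword_plus_eq n); auto.
  apply ok1_plus; [apply HF|apply HG]; auto. Qed.

Lemma dword_scal_eq n c F : okn n F -> forall w, (length w <= S n)%nat ->
  forall z, upper z -> dword w (fun y => (c * F y)%C) z = (c * dword w F z)%C.
Proof. intros HF w; induction w as [|b w IH]; intros Hl z Hz; simpl; auto.
  simpl in Hl. assert (Hl' : (length w <= n)%nat) by (apply le_S_n; exact Hl).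
  destruct b.
  - rewrite (du_ext _ (fun y => (c * dword w F y)%C)) by (auto; intros; apply IH; auto).
    rewrite du_mult, du_const. ring. apply H1_const. apply HF; auto.
  - rewrite (dv_ext _ (fun y => (c * dword w F y)%C)) by (auto; intros; apply IH; auto).
    rewrite dv_mult, dv_const. ring. apply H1_const. apply HF; auto.
Qed.

Lemma okn_scal n c F : okn n F -> okn n (fun y => (c * F y)%C).
Proof. intros HF w Hl tau Ht.
  apply (ok1_ext (fun y => (c * dword w F y)%C)); auto.
  intros; symmetry; apply (dword_scal_eq n); auto.
  apply ok1_mult; [apply ok1_const|apply HF]; auto. Qed.

Lemma smooth_plus F G : smooth_on_H F -> smooth_on_H G -> smooth_on_H (fun y => (F y + G y)%C).
Proof. rewrite !smooth_iff. intros; apply okn_plus; auto. Qed.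
Lemma smooth_scal c F : smooth_on_H F -> smooth_on_H (fun y => (c * F y)%C).
Proof. rewrite !smooth_iff. intros; apply okn_scal; auto. Qed.
Lemma smooth_ext F G : (forall z, upper z -> F z = G z) -> smooth_on_H F -> smooth_on_H G.
Proof. rewrite !smooth_iff. intros HE HF n w Hl tau Ht.
  apply (ok1_ext (dword w F)); auto. intros; apply dword_ext; auto. apply (HF n w Hl tau Ht). Qed.
Lemma smooth_du F : smooth_on_H F -> smooth_on_H (du F).
Proof. rewrite !smooth_iff. intros HF n w Hl tau Ht.
  pose proof (dword_app w true F) as E. simpl in E. rewrite <- E.
  apply (HF (S n)); auto. rewrite length_app; simpl. lia. Qed.
Lemma smooth_dv F : smooth_on_H F -> smooth_on_H (dv F).
Proof. rewrite !smooth_iff. intros HF n w Hl tau Ht.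
  pose proof (dword_app w false F) as E. simpl in E. rewrite <- E.
  apply (HF (S n)); auto. rewrite length_app; simpl. lia. Qed.

Lemma smooth_dtau F : smooth_on_H F -> smooth_on_H (dtau F).
Proof. intros HF. apply (smooth_ext (fun z => (/2 * du F z + (-(/2) * Ci) * dv F z)%C)).
  intros z _; unfold dtau; ring.
  apply smooth_plus; apply smooth_scal; [apply smooth_du|apply smooth_dv]; auto. Qed.
Lemma smooth_dtaubar F : smooth_on_H F -> smooth_on_H (dtaubar F).
Proof. intros HF. apply (smooth_ext (fun z => (/2 * du F z + (/2 * Ci) * dv F z)%C)).
  intros z _; unfold dtaubar; ring.
  apply smooth_plus; apply smooth_scal; [apply smooth_du|apply smooth_dv]; auto. Qed.
Lemma smooth_iter F n : smooth_on_H F -> smooth_on_H (Nat.iter n dtau F).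
Proof. intros HF; induction n; simpl; auto. apply smooth_dtau; auto. Qed.

Lemma smooth_H1 F tau : smooth_on_H F -> upper tau -> H1 F tau.
Proof. rewrite smooth_iff. intros HF Ht. apply (HF 0%nat nil (le_n _) tau Ht). Qed.
Lemma smooth_cont F tau : smooth_on_H F -> upper tau -> continuous F tau.
Proof. rewrite smooth_iff. intros HF Ht. apply (HF 0%nat nil (le_n _) tau Ht). Qed.
Lemma schwarz_part (f : R -> R -> R) (x y : R) (g1 g2 : C -> R) :
  locally_2d (fun u v : R =>
   ex_derive (fun z : R => f z v) u /\ ex_derive (fun z : R => f u z) v /\
   ex_derive (fun z : R => Derive (fun t : R => f z t) v) u /\
   ex_derive (fun z : R => Derive (fun t : R => f t z) u) v) x y ->
  (forall u v, Derive (fun z : R => Derive (fun t : R => f z t) v) u = g1 (u, v)) ->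
  (forall u v, Derive (fun z : R => Derive (fun t : R => f t z) u) v = g2 (u, v)) ->
  continuous (T:=C_UniformSpace) (U:=R_UniformSpace) g1 (x, y) ->
  continuous (T:=C_UniformSpace) (U:=R_UniformSpace) g2 (x, y) ->
  Derive (fun z : R => Derive (fun t : R => f z t) y) x =
  Derive (fun z : R => Derive (fun t : R => f t z) x) y.
Proof. intros Hl E1 E2 C1 C2. apply Schwarz; auto.
- eapply continuity_2d_pt_ext. intros; symmetry; apply E1.
  apply continuity_2d_pt_filterlim.
  eapply filterlim_ext; [|exact C1]. intros [a b]; reflexivity.
- eapply continuity_2d_pt_ext. intros; symmetry; apply E2.
  apply continuity_2d_pt_filterlim.
  eapply filterlim_ext; [|exact C2]. intros [a b]; reflexivity.
Qed.

Lemma schwarz F tau : smooth_on_H F -> upper tau -> du (dv F) tau = dv (du F) tau.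
Proof. intros HF Ht. destruct tau as [x y]. unfold upper in Ht; simpl in Ht.
  assert (Hloc : forall (P : R -> R -> Prop), (forall u v, 0 < v -> P u v) -> locally_2d P x y).
  { intros P HP. exists (mkposreal _ Ht). intros u v _ Hv. apply HP. simpl in Hv.
    apply Rabs_def2 in Hv. lra. }
  assert (S0 := fun u v (Hv : 0 < v) => HF nil (u, v) Hv).
  assert (S1 := fun u v (Hv : 0 < v) => HF (true :: nil) (u, v) Hv).
  assert (S2 := fun u v (Hv : 0 < v) => HF (false :: nil) (u, v) Hv).
  assert (S12 := HF (true :: false :: nil) (x, y) Ht).
  assert (S21 := HF (false :: true :: nil) (x, y) Ht).
  simpl in S0, S1, S2, S12, S21.
  apply injective_projections.
  - change (Derive (fun z => Derive (fun t => Re (F (z,t))) y) x = Derive (fun z => Derive (fun t => Re (F (t,z))) x) y).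
    apply (schwarz_part (fun u v => Re (F (u, v))) x y (fun z => Re (du (dv F) z)) (fun z => Re (dv (du F) z))).
    + apply Hloc. intros u v Hv. destruct (S0 u v Hv) as (a&b&c&d&e).
      destruct (S1 u v Hv) as (a1&b1&c1&d1&e1). destruct (S2 u v Hv) as (a2&b2&c2&d2&e2).
      repeat split; assumption.
    + intros; reflexivity.
    + intros; reflexivity.
    + apply cont_Re. apply S12.
    + apply cont_Re. apply S21.
  - change (Derive (fun z => Derive (fun t => Im (F (z,t))) y) x = Derive (fun z => Derive (fun t => Im (F (t,z))) x) y).
    apply (schwarz_part (fun u v => Im (F (u, v))) x y (fun z => Im (du (dv F) z)) (fun z => Im (dv (du F) z))).
    + apply Hloc. intros u v Hv. destruct (S0 u v Hv) as (a&b&c&d&e).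
      destruct (S1 u v Hv) as (a1&b1&c1&d1&e1). destruct (S2 u v Hv) as (a2&b2&c2&d2&e2).
      repeat split; assumption.
    + intros; reflexivity.
    + intros; reflexivity.
    + apply cont_Im. apply S12.
    + apply cont_Im. apply S21.
Qed.

Close Scope C_scope.

Open Scope C_scope.
Ltac sH1 := match goal with
 | |- H1 (fun _ => ?c) _ => apply H1_const
 | |- H1 (fun z => @?A z * @?B z) _ => apply (H1_mult A B); sH1
 | |- H1 (fun z => @?A z + @?B z) _ => apply (H1_plus A B); sH1
 | _ => try assumption
end.
Lemma du_lin a b F G tau : H1 F tau -> H1 G tau ->
  du (fun z => a * F z + b * G z) tau = a * du F tau + b * du G tau.
Proof. intros HF HG. rewrite du_plus, !du_mult, !du_const. ring. all: sH1. Qed.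
Lemma dv_lin a b F G tau : H1 F tau -> H1 G tau ->
  dv (fun z => a * F z + b * G z) tau = a * dv F tau + b * dv G tau.
Proof. intros HF HG. rewrite dv_plus, !dv_mult, !dv_const. ring. all: sH1. Qed.

Lemma dtau_form F z : dtau F z = /2 * du F z + (-(/2) * Ci) * dv F z.
Proof. unfold dtau. ring. Qed.
Lemma dtaubar_form F z : dtaubar F z = /2 * du F z + (/2 * Ci) * dv F z.
Proof. unfold dtaubar. ring. Qed.

Lemma commute F tau : smooth_on_H F -> upper tau -> dtaubar (dtau F) tau = dtau (dtaubar F) tau.
Proof. intros HF Ht.
  assert (Hu : H1 (du F) tau) by (apply smooth_H1; auto; apply smooth_du; auto).
  assert (Hv : H1 (dv F) tau) by (apply smooth_H1; auto; apply smooth_dv; auto).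
  rewrite (dtaubar_form (dtau F)), (dtau_form (dtaubar F)).
  rewrite (du_ext (dtau F) (fun z => /2 * du F z + (-(/2) * Ci) * dv F z)) by (auto; intros; apply dtau_form).
  rewrite (dv_ext (dtau F) (fun z => /2 * du F z + (-(/2) * Ci) * dv F z)) by (auto; intros; apply dtau_form).
  rewrite (du_ext (dtaubar F) (fun z => /2 * du F z + (/2 * Ci) * dv F z)) by (auto; intros; apply dtaubar_form).
  rewrite (dv_ext (dtaubar F) (fun z => /2 * du F z + (/2 * Ci) * dv F z)) by (auto; intros; apply dtaubar_form).
  rewrite (du_lin _ _ (du F) (dv F)), (dv_lin _ _ (du F) (dv F)), (du_lin _ _ (du F) (dv F)), (dv_lin _ _ (du F) (dv F)) by auto.
  rewrite (schwarz F) by auto. ring. Qed.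
Open Scope C_scope.
Definition sq (t : R) : R := (t ^ 2)%R.
Lemma ex_derive_sq t : ex_derive sq t.
Proof. unfold sq. auto_derive. auto. Qed.
Lemma Derive_sq t : Derive sq t = (2 * t)%R.
Proof. unfold sq. apply is_derive_unique. auto_derive. auto. ring. Qed.
Lemma Lop_form f : forall z, Lop f z = (-(2*Ci)) * Phi sq z * dtaubar f z.
Proof. reflexivity. Qed.

Lemma H1_Lop f tau : smooth_on_H f -> upper tau -> H1 (Lop f) tau.
Proof. intros. apply (H1_ext (fun z => (-(2*Ci)) * Phi sq z * dtaubar f z)); auto.
  apply (H1_mult (fun z => (-(2*Ci)) * Phi sq z)). apply (H1_mult (fun _ => _)). apply H1_const. apply H1_Phi, ex_derive_sq.
  apply smooth_H1; auto. apply smooth_dtaubar; auto. Qed.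

Lemma dtau_Lop k f tau : smooth_on_H f -> upper tau ->
  dtau (Lop f) tau = Ci / 2 * Lap k f tau + Ci * RtoC ((k - 2) / 2 * / Im tau) * Lop f tau.
Proof. intros HF Ht.
  assert (Hb : H1 (dtaubar f) tau) by (apply smooth_H1; auto; apply smooth_dtaubar; auto).
  assert (Hu : H1 (du f) tau) by (apply smooth_H1; auto; apply smooth_du; auto).
  assert (Hv : H1 (dv f) tau) by (apply smooth_H1; auto; apply smooth_dv; auto).
  assert (HP : H1 (Phi sq) tau) by (apply H1_Phi, ex_derive_sq).
  rewrite (dtau_ext (Lop f) (fun z => (-(2*Ci)) * Phi sq z * dtaubar f z)) by (auto; intros; reflexivity).
  rewrite (dtau_mult (fun z => (-(2*Ci)) * Phi sq z)) by sH1.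
  rewrite (dtau_mult (fun _ => _)) by sH1.
  rewrite dtau_const, dtau_Phi, Derive_sq.
  rewrite (dtau_form (dtaubar f)).
  rewrite (du_ext (dtaubar f) (fun z => /2 * du f z + (/2 * Ci) * dv f z)) by (auto; intros; apply dtaubar_form).
  rewrite (dv_ext (dtaubar f) (fun z => /2 * du f z + (/2 * Ci) * dv f z)) by (auto; intros; apply dtaubar_form).
  rewrite (du_lin _ _ (du f) (dv f)), (dv_lin _ _ (du f) (dv f)) by auto.
  rewrite (schwarz f) by auto.
  unfold Lap, Lop, Phi, sq. rewrite dtaubar_form.
  generalize (du (du f) tau) (dv (du f) tau) (dv (dv f) tau) (du f tau) (dv f tau).
  unfold upper in Ht. generalize (Im tau) Ht. intros v Hv0 a b c d e.
  Time (apply injective_projections; simpl; field; lra).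
Qed.
Definition ip (m : nat) (t : R) : R := ((/ t) ^ m)%R.
Lemma ex_derive_ip m t : t <> 0%R -> ex_derive (ip m) t.
Proof. intros. unfold ip. auto_derive. auto. Qed.
Lemma Derive_ip m t : t <> 0%R -> Derive (ip m) t = (- INR m * (/ t) ^ (S m))%R.
Proof. intros Ht. unfold ip. apply is_derive_unique. auto_derive. auto.
  destruct m as [|p]. simpl. ring. rewrite S_INR. simpl pred. simpl. field. auto. Qed.

Fixpoint falling' (x : R) (s : nat) : R := match s with O => 1%R | S s' => (falling' x s' * (x - INR s'))%R end.

Definition cc (k : R) (n : nat) : C := RtoC (falling (- k) n) * Cpow (- Ci / 2) n.

Lemma L_iter k f : smooth_on_H f -> (forall z, upper z -> Lap k f z = 0) ->
  forall n tau, upper tau -> Lop (Nat.iter n dtau f) tau = cc k n * RtoC (ip n (Im tau)) * Lop f tau.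
Proof. intros HF HL n. induction n as [|n IH]; intros tau Ht.
- simpl. unfold cc, ip. simpl. ring.
- assert (HFn : smooth_on_H (Nat.iter n dtau f)) by (apply smooth_iter; auto).
  change (Nat.iter (S n) dtau f) with (dtau (Nat.iter n dtau f)).
  unfold Lop at 1. rewrite commute by auto.
  rewrite (dtau_ext (dtaubar (Nat.iter n dtau f))
             (fun z => (cc k n * (Ci / 2)) * Phi (ip (S (S n))) z * Lop f z)).
  2: exact Ht.
  2: { intros z Hz. specialize (IH z Hz). unfold Lop at 1 in IH.
       generalize dependent (dtaubar (Nat.iter n dtau f) z). intros X IH.
       unfold Phi, ip in *. unfold upper in Hz. generalize dependent (Im z). intros v Hv IH.
       replace X with ((Ci / 2 * RtoC (/ v ^ 2)) * (- (2 * Ci) * RtoC (v ^ 2) * X)).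
       rewrite IH. replace ((/ v) ^ S (S n))%R with ((/ v) ^ n * (/ v) ^ 2)%R by (simpl; ring).
       generalize (cc k n) (Lop f z) ((/ v) ^ n)%R. intros c L w.
       apply injective_projections; simpl; field; lra.
       apply injective_projections; simpl; field; lra. }
  assert (Hv0 : Im tau <> 0%R) by (unfold upper in Ht; lra).
  rewrite (dtau_mult (fun z => (cc k n * (Ci / 2)) * Phi (ip (S (S n))) z)).
  2: { apply (H1_mult (fun _ => _)). apply H1_const. apply H1_Phi, ex_derive_ip; auto. }
  2: { apply H1_Lop; auto. }
  rewrite (dtau_mult (fun _ => _)).
  2: apply H1_const.
  2: apply H1_Phi, ex_derive_ip; auto.
  rewrite dtau_const, dtau_Phi, Derive_ip by auto.
  rewrite (dtau_Lop k) by auto. rewrite HL by auto.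
  unfold cc. rewrite Cpow_S. simpl falling. rewrite RtoC_mult.
  unfold Phi, ip. replace ((/ Im tau) ^ S (S n))%R with ((/ Im tau) ^ n * (/ Im tau) ^ 2)%R by (simpl; ring).
  replace ((/ Im tau) ^ S (S (S n)))%R with ((/ Im tau) ^ n * (/ Im tau) ^ 3)%R by (simpl; ring).
  replace ((/ Im tau) ^ S n)%R with ((/ Im tau) ^ n * (/ Im tau))%R by (simpl; ring).
  generalize ((/ Im tau) ^ n)%R. intro w. rewrite !S_INR. generalize (Cpow (- Ci / 2) n) (falling (- k) n) (Lop f tau) (INR n).
  intros P Fk L N. unfold upper in Ht. generalize dependent (Im tau). intros v Hv _.
  Time (apply injective_projections; simpl; field; lra).
Qed.
Close Scope C_scope.

Close Scope C_scope.

Open Scope C_scope.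
Lemma plusC (a b : C) : plus a b = a + b. Proof. reflexivity. Qed.
Lemma sumC_O (a : nat -> C) : @eq C (sum_n a 0) (a 0%nat). Proof. exact (sum_O a). Qed.
Lemma sumC_S (a : nat -> C) n : @eq C (sum_n a (S n)) (sum_n a n + a (S n)). Proof. exact (sum_Sn a n). Qed.
Lemma sumC_shift (a : nat -> C) n : @eq C (sum_n a (S n)) (a 0%nat + sum_n (fun m => a (S m)) n).
Proof. induction n. rewrite sumC_S, !sumC_O. reflexivity.
  rewrite sumC_S, IHn, (sumC_S (fun m => a (S m))). ring. Qed.
Lemma sumC_plus (a b : nat -> C) n : @eq C (sum_n (fun m => a m + b m) n) (sum_n a n + sum_n b n).
Proof. induction n. rewrite !sumC_O. reflexivity. rewrite !sumC_S, IHn. ring. Qed.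
Lemma sumC_scal (c : C) (a : nat -> C) n : @eq C (sum_n (fun m => c * a m) n) (c * sum_n a n).
Proof. induction n. rewrite !sumC_O. reflexivity. rewrite !sumC_S, IHn. ring. Qed.
Lemma sumC_ext (a b : nat -> C) n : (forall m, (m <= n)%nat -> a m = b m) -> @eq C (sum_n a n) (sum_n b n).
Proof. intros H. induction n. rewrite !sumC_O. apply H; lia. rewrite !sumC_S, IHn. rewrite H. reflexivity. lia. intros; apply H; lia. Qed.
Lemma sumC_zero n : @eq C (sum_n (fun _ : nat => (0:C)) n) 0.
Proof. induction n. rewrite sumC_O. reflexivity. rewrite sumC_S, IHn. ring. Qed.

Lemma H1_sum (T : nat -> C -> C) n tau : upper tau -> (forall m, (m <= n)%nat -> H1 (T m) tau) ->
  H1 (fun z => sum_n (fun m => T m z) n) tau.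
Proof. intros Ht H. induction n.
- apply (H1_ext (T 0%nat)). exact Ht. intros z _. rewrite sumC_O. reflexivity. apply H; lia.
- apply (H1_ext (fun z => sum_n (fun m => T m z) n + T (S n) z)). exact Ht.
  intros z _. rewrite sumC_S. reflexivity.
  apply (H1_plus (fun z => sum_n (fun m => T m z) n)). apply IHn; intros; apply H; lia. apply H; lia.
Qed.
Lemma dtau_sum (T : nat -> C -> C) n tau : upper tau -> (forall m, (m <= n)%nat -> H1 (T m) tau) ->
  dtau (fun z => sum_n (fun m => T m z) n) tau = sum_n (fun m => dtau (T m) tau) n.
Proof. intros Ht H. induction n.
- rewrite sumC_O. apply dtau_ext. exact Ht. intros z _. rewrite sumC_O. reflexivity.
- rewrite sumC_S, <- IHn by (intros; apply H; lia).
  rewrite (dtau_ext _ (fun z => sum_n (fun m => T m z) n + T (S n) z)) by (auto; intros; rewrite sumC_S; reflexivity).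
  apply (dtau_plus (fun z => sum_n (fun m => T m z) n)). apply H1_sum; auto. apply H; lia.
Qed.
Lemma dtaubar_sum (T : nat -> C -> C) n tau : upper tau -> (forall m, (m <= n)%nat -> H1 (T m) tau) ->
  dtaubar (fun z => sum_n (fun m => T m z) n) tau = sum_n (fun m => dtaubar (T m) tau) n.
Proof. intros Ht H. induction n.
- rewrite sumC_O. apply dtaubar_ext. exact Ht. intros z _. rewrite sumC_O. reflexivity.
- rewrite sumC_S, <- IHn by (intros; apply H; lia).
  rewrite (dtaubar_ext _ (fun z => sum_n (fun m => T m z) n + T (S n) z)) by (auto; intros; rewrite sumC_S; reflexivity).
  apply (dtaubar_plus (fun z => sum_n (fun m => T m z) n)). apply H1_sum; auto. apply H; lia.
Qed.
Close Scope C_scope.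
Lemma falling_S_l x n : falling x (S n) = x * falling (x - 1) n.
Proof. revert x. induction n; intros x. simpl. ring.
  change (falling x (S (S n))) with (falling x (S n) * (x - INR (S n))).
  rewrite IHn. simpl falling. rewrite S_INR. ring. Qed.
Lemma falling_add x a b : falling x (a + b) = falling x a * falling (x - INR a) b.
Proof. induction b. rewrite Nat.add_0_r. simpl. ring.
  rewrite Nat.add_succ_r. simpl falling. rewrite IHb, plus_INR. ring. Qed.
Lemma falling_nat_self n : falling (INR n) n = INR (Factorial.fact n).
Proof. induction n. reflexivity. rewrite falling_S_l, S_INR.
  replace (INR n + 1 - 1) with (INR n) by ring. rewrite IHn. change (Factorial.fact (S n)) with (S n * Factorial.fact n)%nat. rewrite mult_INR, S_INR. ring. Qed.
Lemma falling_nat_over n : falling (INR n) (S n) = 0.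
Proof. simpl. ring. Qed.
Lemma fact_pos n : INR (Factorial.fact n) <> 0.
Proof. apply not_0_INR. apply Factorial.fact_neq_0. Qed.

Definition rc (k : R) (j m : nat) : R := falling (INR j) m / INR (Factorial.fact m) * falling (k + INR j - 1) (j - m).

Lemma rc_rec k j m : (m <= S j)%nat ->
  rc k (S j) m = rc k j m * (k + INR j + INR m) + match m with O => 0 | S m' => rc k j m' end.
Proof. intros Hm. unfold rc. destruct m as [|m'].
- change (Factorial.fact 0) with 1%nat. simpl (falling _ 0). rewrite !Nat.sub_0_r. rewrite falling_S_l, (S_INR j). replace (INR 0) with 0 by reflexivity. replace (INR 1) with 1 by reflexivity.
  replace (k + (INR j + 1) - 1 - 1) with (k + INR j - 1) by ring.
  replace (k + (INR j + 1) - 1) with (k + INR j + 0) by ring. field.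
- destruct (Nat.eq_dec m' j) as [->|Hne].
  + rewrite !Nat.sub_diag. replace (j - S j)%nat with 0%nat by lia.
    rewrite falling_nat_over. rewrite falling_nat_self, falling_nat_self. simpl falling.
    field. split; apply fact_pos.
  + assert (Hd : exists d, j = (m' + S d)%nat) by (exists (j - S m')%nat; lia).
    destruct Hd as [d ->].
    replace (S (m' + S d) - S m')%nat with (S d) by lia.
    replace (m' + S d - S m')%nat with d by lia.
    replace (m' + S d - m')%nat with (S d) by lia.
    rewrite (falling_S_l (INR (S (m' + S d))) m'). rewrite (S_INR (m' + S d)).
    replace (INR (m' + S d) + 1 - 1) with (INR (m' + S d)) by ring.
    rewrite (falling_S_l (k + (INR (m' + S d) + 1) - 1) d).
    replace (k + (INR (m' + S d) + 1) - 1 - 1) with (k + INR (m' + S d) - 1) by ring.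
    change (falling (INR (m' + S d)) (S m')) with (falling (INR (m' + S d)) m' * (INR (m' + S d) - INR m')).
    change (falling (k + INR (m' + S d) - 1) (S d)) with (falling (k + INR (m' + S d) - 1) d * (k + INR (m' + S d) - 1 - INR d)).
    change (Factorial.fact (S m')) with (S m' * Factorial.fact m')%nat. rewrite mult_INR.
    rewrite !plus_INR, !S_INR. field. split; [apply fact_pos|]. pose proof (pos_INR m'); lra.
Qed.

Close Scope C_scope.


Lemma Rit_S k j F : Rit k (S j) F = Rop (k + 2 * INR j) (Rit k j F).
Proof. revert k F. induction j; intros k F.
- simpl. replace (k + 2 * 0) with k by ring. reflexivity.
- change (Rit k (S (S j)) F) with (Rit (k + 2) (S j) (Rop k F)). rewrite IHj.
  change (Rit (k + 2) j (Rop k F)) with (Rit k (S j) F).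
  replace (k + 2 + 2 * INR j) with (k + 2 * INR (S j)) by (rewrite S_INR; ring). reflexivity.
Qed.

Lemma rc_over k j : rc k j (S j) = 0.
Proof. unfold rc. rewrite falling_nat_over. unfold Rdiv. ring. Qed.

Open Scope C_scope.
Definition Ex (k : R) (j : nat) (F : C -> C) (z : C) : C :=
  sum_n (fun m => (RtoC (rc k j m) * Cpow (2 * Ci) m) * (Phi (ip (j - m)) z * Nat.iter m dtau F z)) j.

Lemma dtau_term (c : C) phi D tau : H1 D tau -> ex_derive phi (Im tau) ->
  dtau (fun z => c * (Phi phi z * D z)) tau = c * (- Ci / 2 * RtoC (Derive phi (Im tau)) * D tau + Phi phi tau * dtau D tau).
Proof. intros HD Hp.
  rewrite (dtau_mult (fun _ => c) (fun z => Phi phi z * D z)).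
  rewrite dtau_const, dtau_mult, dtau_Phi. ring.
  apply H1_Phi; auto. auto. apply H1_const. apply (H1_mult (Phi phi)). apply H1_Phi; auto. auto. Qed.

Lemma H1_term (c : C) phi D tau : H1 D tau -> ex_derive phi (Im tau) -> H1 (fun z => c * (Phi phi z * D z)) tau.
Proof. intros. apply (H1_mult (fun _ => c)). apply H1_const. apply (H1_mult (Phi phi)). apply H1_Phi; auto. auto. Qed.

Lemma Rit_exp k F : smooth_on_H F -> forall j tau, upper tau -> Rit k j F tau = Ex k j F tau.
Proof. intros HF j. induction j as [|j IH]; intros tau Ht.
- unfold Ex. rewrite sumC_O. simpl. unfold rc, Phi, ip. simpl.
  apply injective_projections; simpl; field.
- assert (Hv0 : Im tau <> 0%R) by (unfold upper in Ht; lra).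
  assert (HD : forall m, H1 (Nat.iter m dtau F) tau) by (intros; apply smooth_H1; auto; apply smooth_iter; auto).
  rewrite Rit_S. unfold Rop. rewrite (dtau_ext (Rit k j F) (Ex k j F)) by auto. rewrite IH by auto.
  unfold Ex at 1. rewrite dtau_sum; auto.
  2: { intros m _. apply H1_term; auto. apply ex_derive_ip; auto. }
  rewrite (sumC_ext _ (fun m => (RtoC (rc k j m) * Cpow (2 * Ci) m) * (- Ci / 2 * RtoC (Derive (ip (j - m)) (Im tau)) * Nat.iter m dtau F tau + Phi (ip (j - m)) tau * dtau (Nat.iter m dtau F) tau))).
  2: { intros m _. apply dtau_term; auto. apply ex_derive_ip; auto. }
  unfold Ex at 1. rewrite <- !sumC_scal, <- sumC_plus.
  pose (A := fun m => (RtoC (rc k j m * (k + INR j + INR m)) * Cpow (2 * Ci) m) * (Phi (ip (S j - m)) tau * Nat.iter m dtau F tau)).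
  pose (B := fun m => (RtoC (match m with O => 0%R | S m' => rc k j m' end) * Cpow (2 * Ci) m) * (Phi (ip (S j - m)) tau * Nat.iter m dtau F tau)).
  transitivity (sum_n (fun m => A m + B (S m)) j).
  2: { unfold Ex. symmetry.
       rewrite (sumC_ext _ (fun m => A m + B m)).
       2: { intros m Hm. unfold A, B. rewrite rc_rec by auto. rewrite RtoC_plus. ring. }
       rewrite !sumC_plus, sumC_S, sumC_shift.
       replace (A (S j)) with (RtoC 0) by (unfold A; rewrite rc_over; apply injective_projections; simpl; ring).
       replace (B 0%nat) with (RtoC 0) by (unfold B; apply injective_projections; simpl; ring).
       ring. }
  apply sumC_ext. intros m Hm. unfold A, B. simpl (Nat.sub (S j) (S m)).
  rewrite (Nat.sub_succ_l m j Hm). rewrite Derive_ip by auto. unfold Phi, ip.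
  rewrite minus_INR by auto. simpl (Nat.iter (S m) dtau F tau). rewrite Cpow_S.
  change ((/ Im tau) ^ S (j - m))%R with (/ Im tau * (/ Im tau) ^ (j - m))%R.
  change ((/ Im tau) ^ S (S (j - m)))%R with (/ Im tau * (/ Im tau * (/ Im tau) ^ (j - m)))%R.
  generalize ((/ Im tau) ^ (j - m))%R (Cpow (2 * Ci) m) (Nat.iter m dtau F tau) (dtau (Nat.iter m dtau F) tau) (rc k j m) (INR m) (INR j).
  intros w P D0 D1 r M J. generalize dependent (Im tau). intros v Hv.
  apply injective_projections; simpl; field; auto.
Qed.

Close Scope C_scope.


Lemma F3 s n : falling (INR (s + n)) s * INR (Factorial.fact n) = INR (Factorial.fact (s + n)).
Proof. rewrite <- (falling_nat_self (s + n)). rewrite falling_add.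
  rewrite plus_INR. replace (INR s + INR n - INR s) with (INR n) by ring.
  rewrite falling_nat_self. reflexivity. Qed.

Lemma falling_neg x n : falling (- x) n = (-1) ^ n * falling (x + INR n - 1) n.
Proof. induction n. simpl. ring.
  change (falling (- x) (S n)) with (falling (- x) n * (- x - INR n)). rewrite IHn.
  rewrite (falling_S_l (x + INR (S n) - 1)). rewrite S_INR.
  replace (x + (INR n + 1) - 1 - 1) with (x + INR n - 1) by ring. simpl pow. ring. Qed.

Lemma R1 k l s n :
  (-1) ^ s * gbinom (k + INR (s + n) - 1) s * gbinom (l + INR (s + n) - 1) n * falling (- k) n
  = (-1) ^ (s + n) * gbinom (k + INR (s + n) - 1) (s + n) * rc l (s + n) s.
Proof. unfold gbinom, rc. replace (s + n - s)%nat with n by lia.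
  rewrite falling_neg. rewrite <- (F3 s n).
  rewrite (falling_add (k + INR (s + n) - 1) s n).
  replace (k + INR (s + n) - 1 - INR s) with (k + INR n - 1) by (rewrite plus_INR; ring).
  rewrite pow_add.
  assert (Hf : falling (INR (s + n)) s <> 0).
  { intro E. pose proof (F3 s n) as E2. rewrite E in E2. apply (fact_pos (s + n)). lra. }
  field. repeat split; auto; apply fact_pos. Qed.

Lemma R2 k l s n :
  (-1) ^ s * gbinom (k + INR (n + s) - 1) s * gbinom (l + INR (n + s) - 1) n * falling (- l) s
  = gbinom (l + INR (n + s) - 1) (n + s) * rc k (n + s) n.
Proof. unfold gbinom, rc. replace (n + s - n)%nat with s by lia.
  rewrite falling_neg. rewrite <- (F3 n s).
  rewrite (falling_add (l + INR (n + s) - 1) n s).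
  replace (l + INR (n + s) - 1 - INR n) with (l + INR s - 1) by (rewrite plus_INR; ring).
  assert (Hf : falling (INR (n + s)) n <> 0).
  { intro E. pose proof (F3 n s) as E2. rewrite E in E2. apply (fact_pos (n + s)). lra. }
  match goal with |- ?sg * ?A * ?B * (?sg2 * ?Cc) = _ =>
    replace (sg * A * B * (sg2 * Cc)) with ((sg * sg2) * (A * B * Cc)) by ring end.
  rewrite <- Rpow_mult_distr. replace (-1 * -1) with 1 by ring. rewrite pow1.
  field. repeat split; auto; apply fact_pos. Qed.

Open Scope C_scope.
Lemma p_nz : RtoC (2 * PI) * Ci <> 0.
Proof. apply Cmult_neq_0. intro E. apply RtoC_inj in E. pose proof PI_RGT_0. lra. exact Ci_nz. Qed.
Lemma m4pi : RtoC (- 4 * PI) = (RtoC (2 * PI) * Ci) * (2 * Ci).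
Proof. apply injective_projections; simpl; ring. Qed.
Lemma QR n : Cpow (- Ci / 2) n * Cpow (2 * Ci) n = 1.
Proof. rewrite <- Cpow_mult_l. replace (- Ci / 2 * (2 * Ci)) with (RtoC 1).
  apply Cpow_1_l. apply injective_projections; simpl; field. Qed.

Lemma T1_alg j s k l v (Lf D : C) : (s <= j)%nat ->
 Cpow (RtoC (- 4 * PI)) j * (RtoC ((-1) ^ s * gbinom (k + INR j - 1) s * gbinom (l + INR j - 1) (j - s)) * ((/ Cpow (RtoC (2 * PI) * Ci) (j - s) * (cc k (j - s) * RtoC (ip (j - s) v) * Lf)) * (/ Cpow (RtoC (2 * PI) * Ci) s * D)))
 = RtoC ((-1) ^ j * gbinom (k + INR j - 1) j) * Lf * ((RtoC (rc l j s) * Cpow (2 * Ci) s) * (RtoC (ip (j - s) v) * D)).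
Proof. intros Hs. destruct (Nat.le_exists_sub s j Hs) as [n [Hj _]].
  rewrite Nat.add_comm in Hj. subst j. replace (s + n - s)%nat with n by lia.
  rewrite m4pi, Cpow_mult_l, !Cpow_add_r. unfold cc.
  assert (HQ := QR n). pose proof (R1 k l s n) as HR.
  assert (Ha := Cpow_nz _ n p_nz). assert (Hb := Cpow_nz _ s p_nz).
  generalize dependent (Cpow (RtoC (2 * PI) * Ci) n). generalize dependent (Cpow (RtoC (2 * PI) * Ci) s).
  intros Pb Hb Pa Ha.
  transitivity (RtoC ((-1) ^ s * gbinom (k + INR (s + n) - 1) s * gbinom (l + INR (s + n) - 1) n * falling (- k) n)
     * (Cpow (- Ci / 2) n * Cpow (2 * Ci) n) * Cpow (2 * Ci) s * RtoC (ip n v) * Lf * D).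
  { rewrite !RtoC_mult. field. split; auto. }
  rewrite HQ, HR, !RtoC_mult. ring.
Qed.

Lemma T2_alg j s k l v (Lg D : C) : (s <= j)%nat ->
 Cpow (RtoC (- 4 * PI)) j * (RtoC ((-1) ^ s * gbinom (k + INR j - 1) s * gbinom (l + INR j - 1) (j - s)) * ((/ Cpow (RtoC (2 * PI) * Ci) (j - s) * D) * (/ Cpow (RtoC (2 * PI) * Ci) s * (cc l s * RtoC (ip s v) * Lg))))
 = RtoC (gbinom (l + INR j - 1) j) * ((RtoC (rc k j (j - s)) * Cpow (2 * Ci) (j - s)) * (RtoC (ip (j - (j - s)) v) * D)) * Lg.
Proof. intros Hs. destruct (Nat.le_exists_sub s j Hs) as [n [Hj _]].
  subst j. replace (n + s - s)%nat with n by lia. replace (n + s - n)%nat with s by lia.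
  rewrite m4pi, Cpow_mult_l, !Cpow_add_r. unfold cc.
  assert (HQ := QR s). pose proof (R2 k l s n) as HR.
  assert (Ha := Cpow_nz _ n p_nz). assert (Hb := Cpow_nz _ s p_nz).
  generalize dependent (Cpow (RtoC (2 * PI) * Ci) n). generalize dependent (Cpow (RtoC (2 * PI) * Ci) s).
  intros Pb Hb Pa Ha.
  transitivity (RtoC ((-1) ^ s * gbinom (k + INR (n + s) - 1) s * gbinom (l + INR (n + s) - 1) n * falling (- l) s)
     * (Cpow (- Ci / 2) s * Cpow (2 * Ci) s) * Cpow (2 * Ci) n * RtoC (ip s v) * Lg * D).
  { rewrite !RtoC_mult. field. split; auto. }
  rewrite HQ, HR, !RtoC_mult. ring.
Qed.
Close Scope C_scope.

Close Scope C_scope.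

Open Scope C_scope.

Lemma Lop_sum (T : nat -> C -> C) n tau : upper tau -> (forall m, (m <= n)%nat -> H1 (T m) tau) ->
  Lop (fun z => sum_n (fun m => T m z) n) tau = sum_n (fun m => Lop (T m) tau) n.
Proof. intros. unfold Lop. rewrite dtaubar_sum by auto. rewrite <- sumC_scal. reflexivity. Qed.

Lemma Lop_mult3 (c : C) X Y tau : H1 X tau -> H1 Y tau ->
  Lop (fun z => c * X z * Y z) tau = c * (Lop X tau * Y tau + X tau * Lop Y tau).
Proof. intros. unfold Lop. rewrite (dtaubar_mult (fun z => c * X z) Y), (dtaubar_mult (fun _ => c) X), dtaubar_const.
  ring. apply H1_const. auto. apply (H1_mult (fun _ => c)). apply H1_const. auto. auto. Qed.

Lemma Lop_scal (c : C) X tau : H1 X tau -> Lop (fun z => c * X z) tau = c * Lop X tau.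
Proof. intros. unfold Lop. rewrite (dtaubar_mult (fun _ => c) X), dtaubar_const. ring. apply H1_const. auto. Qed.

Lemma sumC_refl (a : nat -> C) n : @eq C (sum_n a n) (sum_n (fun s => a (n - s)%nat) n).
Proof. induction n. rewrite !sumC_O. reflexivity.
  rewrite (sumC_shift (fun s => a (S n - s)%nat)). simpl (S n - 0)%nat. simpl (Nat.sub (S n) (S _)).
  rewrite <- IHn, sumC_S. ring. Qed.

Lemma sumC_scal_r (c : C) (a : nat -> C) n : @eq C (sum_n a n * c) (sum_n (fun m => a m * c) n).
Proof. rewrite Cmult_comm, <- sumC_scal. apply sumC_ext. intros; ring. Qed.
Lemma rhs_sum (c1 c2 Lg Lf : C) (a b : nat -> C) j :
  c1 * sum_n a j * Lg + c2 * Lf * sum_n b j = sum_n (fun s => c2 * Lf * b s + c1 * a (j - s)%nat * Lg) j.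
Proof. rewrite (sumC_refl a j). rewrite sumC_plus. rewrite <- (sumC_scal (c2 * Lf)).
  rewrite (sumC_ext (fun s => c1 * a (j - s)%nat * Lg) (fun s => (c1 * Lg) * a (j - s)%nat)) by (intros; ring).
  rewrite (sumC_scal (c1 * Lg)). ring. Qed.

Close Scope C_scope.


Theorem proposition3p6 (G : mp2 -> Prop) (HG : congruence_subgroup_Mp2 G)
  (k l : R) (f g : C -> C)
  (Hf : harmonic_Maass G k f) (Hg : harmonic_Maass G l g) :
  forall (j : nat) (tau : C), upper tau ->
    (Cpow (RtoC (- 4 * PI)) j * Lop (RCbracket k l j f g) tau)%C =
    (RtoC (gbinom (l + INR j - 1) j) * Rit k j f tau * Lop g tau
     + RtoC ((-1) ^ j * gbinom (k + INR j - 1) j) * Lop f tau * Rit l j g tau)%C.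
Proof.
  intros j tau Ht.
  destruct Hf as [Sf [_ Hlf]]. destruct Hg as [Sg [_ Hlg]].
  assert (HDf : forall m, H1 (Nat.iter m dtau f) tau) by (intros; apply smooth_H1; auto; apply smooth_iter; auto).
  assert (HDg : forall m, H1 (Nat.iter m dtau g) tau) by (intros; apply smooth_H1; auto; apply smooth_iter; auto).
  assert (Hnf : forall m, H1 (dnorm m f) tau) by (intros; apply (H1_mult (fun _ => _)); [apply H1_const|auto]).
  assert (Hng : forall m, H1 (dnorm m g) tau) by (intros; apply (H1_mult (fun _ => _)); [apply H1_const|auto]).
  unfold RCbracket. rewrite Lop_sum.
  2: exact Ht.
  2: { intros m _. apply (H1_mult (fun z => (_ * dnorm _ f z)%C) (dnorm m g)). apply (H1_mult (fun _ => _) (dnorm (j - m) f)).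
       apply H1_const. apply Hnf. apply Hng. }
  rewrite (sumC_ext _ (fun s => RtoC ((-1) ^ s * gbinom (k + INR j - 1) s * gbinom (l + INR j - 1) (j - s)) *
     ((/ Cpow (RtoC (2 * PI) * Ci) (j - s) * (cc k (j - s) * RtoC (ip (j - s) (Im tau)) * Lop f tau)) * (/ Cpow (RtoC (2 * PI) * Ci) s * Nat.iter s dtau g tau)
     + (/ Cpow (RtoC (2 * PI) * Ci) (j - s) * Nat.iter (j - s) dtau f tau) * (/ Cpow (RtoC (2 * PI) * Ci) s * (cc l s * RtoC (ip s (Im tau)) * Lop g tau))))%C).
  2: { intros s Hs. rewrite Lop_mult3 by auto. unfold dnorm.
       rewrite !Lop_scal by auto. rewrite (L_iter k f Sf Hlf) by auto. rewrite (L_iter l g Sg Hlg) by auto. reflexivity. }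
  rewrite (Rit_exp k f Sf j tau Ht), (Rit_exp l g Sg j tau Ht). unfold Ex.
  rewrite <- sumC_scal, rhs_sum. apply sumC_ext. intros s Hs.
  rewrite Cmult_plus_distr_l, Cmult_plus_distr_l.
  unfold Phi.
  rewrite T1_alg by auto. rewrite T2_alg by auto. reflexivity.
Qed.
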